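(* Let $L, L_{xy},\mu_y, t, r>0$ with $\mu_y\leq L$. Then there exist $n,m$, a function $F\in\mathcal{F}(L, L, L_{xy}, 0, \mu_y)$ on $\mathbb{R}^n\times\mathbb{R}^m$ with a unique saddle point $(x^\star, y^\star)$, and a point $(x^1, y^1)$ with $\|x^1-x^\star\|^2+\|y^1-y^\star\|^2=r^2$, such that the point $x^{2}=x^1-t\nabla_x F(x^1, y^1)$, $y^{2}=y^1+t\nabla_y F(x^1, y^1)$ satisfies $$ \|x^2-x^\star\|^2+\|y^2-y^\star\|^2\geq \alpha\left(\|x^1-x^\star\|^2+\|y^1-y^\star\|^2\right) $$ for some $\alpha\geq 1$.
   Context: $\mathcal{F}(L_x, L_y, L_{xy}, \mu_x, \mu_y)$ (with $\mu_x,\mu_y\ge 0$) denotes the set of differentiable $F:\mathbb{R}^n\times\mathbb{R}^m\to\mathbb{R}$ such that for all $x,x_1,x_2,y,y_1,y_2$: $\|\nabla_x F(x_2, y)-\nabla_x F(x_1, y)\|\leq L_x\|x_2-x_1\|$; $\|\nabla_y F(x, y_2)-\nabla_y F(x, y_1)\|\leq L_y\|y_2-y_1\|$; $\|\nabla_x F(x, y_2)-\nabla_x F(x, y_1)\|\leq L_{xy}\|y_2-y_1\|$; $\|\nabla_y F(x_2, y)-\nabla_y F(x_1, y)\|\leq L_{xy}\|x_2-x_1\|$; $F(\cdot, y)-\tfrac{\mu_x}{2}\|\cdot\|^2$ convex for every $y$ and $F(x,\cdot)+\tfrac{\mu_y}{2}\|\cdot\|^2$ concave for every $x$ (so $\mu_x=0$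 means merely convex in $x$). A saddle point is $(x^\star,y^\star)$ with $F(x^\star, y)\leq F(x^\star, y^\star)\leq F(x, y^\star)$ for all $x,y$. *)

(* Defs.v *)
From HB Require Import structures.
From mathcomp Require Import all_boot all_order all_algebra.
From mathcomp Require Import all_classical all_reals all_analysis.
Set Implicit Arguments. Unset Strict Implicit. Unset Printing Implicit Defensive.
Import Order.TTheory GRing.Theory Num.Theory.
Import numFieldNormedType.Exports.
Local Open Scope ring_scope.

Section Defs.
Variable R : realType.

Definition dotv (n : nat) (u v : 'rV[R]_n) : R := \sum_(i < n) u 0 i * v 0 i.
Definition sqnorm (n : nat) (u : 'rV[R]_n) : R := dotv u u.
Definition enorm (n : nat) (u : 'rV[R]_n) : R := Num.sqrt (sqnorm u).

Definition uncurryF (n m : nat) (F : 'rV[R]_n -> 'rV[R]_m -> R)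
  (z : 'rV[R]_n * 'rV[R]_m) : R := F z.1 z.2.

Definition gradx (n m : nat) (F : 'rV[R]_n -> 'rV[R]_m -> R)
  (x : 'rV[R]_n) (y : 'rV[R]_m) : 'rV[R]_n :=
  \row_(i < n) ('d (uncurryF F) (x, y) (delta_mx 0 i, 0)).
Definition grady (n m : nat) (F : 'rV[R]_n -> 'rV[R]_m -> R)
  (x : 'rV[R]_n) (y : 'rV[R]_m) : 'rV[R]_m :=
  \row_(j < m) ('d (uncurryF F) (x, y) (0, delta_mx 0 j)).

Definition convex_fun (n : nat) (f : 'rV[R]_n -> R) : Prop :=
  forall (u v : 'rV[R]_n) (s : R), 0 <= s -> s <= 1 ->
    f (s *: u + (1 - s) *: v) <= s * f u + (1 - s) * f v.
Definition concave_fun (n : nat) (f : 'rV[R]_n -> R) : Prop :=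
  convex_fun (fun u => - f u).

Definition in_class (n m : nat) (Lx Ly Lxy mux muy : R)
  (F : 'rV[R]_n -> 'rV[R]_m -> R) : Prop :=
  (forall z, differentiable (uncurryF F) z) /\
  (forall x1 x2 y, enorm (gradx F x2 y - gradx F x1 y) <= Lx * enorm (x2 - x1)) /\
  (forall x y1 y2, enorm (grady F x y2 - grady F x y1) <= Ly * enorm (y2 - y1)) /\
  (forall x y1 y2, enorm (gradx F x y2 - gradx F x y1) <= Lxy * enorm (y2 - y1)) /\
  (forall x1 x2 y, enorm (grady F x2 y - grady F x1 y) <= Lxy * enorm (x2 - x1)) /\
  (forall y, convex_fun (fun x => F x y - mux / 2 * sqnorm x)) /\
  (forall x, concave_fun (fun y => F x y + muy / 2 * sqnorm y)).

Definition is_saddle (n m : nat) (F : 'rV[R]_n -> 'rV[R]_m -> R)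
  (xs : 'rV[R]_n) (ys : 'rV[R]_m) : Prop :=
  forall x y, F xs y <= F xs ys /\ F xs ys <= F x ys.

Definition unique_saddle (n m : nat) (F : 'rV[R]_n -> 'rV[R]_m -> R)
  (xs : 'rV[R]_n) (ys : 'rV[R]_m) : Prop :=
  is_saddle F xs ys /\
  forall x' y', is_saddle F x' y' -> x' = xs /\ y' = ys.

End Defs.

(* Main.v *)
Require Import Defs.
From HB Require Import structures.
From mathcomp Require Import all_boot all_order all_algebra.
From mathcomp Require Import all_classical all_reals all_analysis.
From mathcomp Require Import ring lra.
Import Order.TTheory GRing.Theory Num.Theory.
Import numFieldNormedType.Exports.
Local Open Scope ring_scope.

Section S.
Variable R : realType.
Implicit Types z h : 'rV[R]_1 * 'rV[R]_1.

Definition p1 z : R := z.1 0 0.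
Definition p2 z : R := z.2 0 0.

Lemma p1_lin : linear p1.
Proof. by move=> a u v; rewrite /p1 /= !mxE. Qed.
Lemma p2_lin : linear p2.
Proof. by move=> a u v; rewrite /p2 /= !mxE. Qed.

HB.instance Definition _ := GRing.isLinear.Build R _ _ _ p1 p1_lin.
HB.instance Definition _ := GRing.isLinear.Build R _ _ _ p2 p2_lin.

Lemma p1_cont : continuous p1.
Proof.
move=> z; apply: (@continuous_comp _ _ _ fst (fun N : 'rV[R]_1 => N 0 0)).
  exact: cvg_fst.
exact: coord_continuous.
Qed.
Lemma p2_cont : continuous p2.
Proof.
move=> z; apply: (@continuous_comp _ _ _ snd (fun N : 'rV[R]_1 => N 0 0)).
  exact: cvg_snd.
exact: coord_continuous.
Qed.

Global Instance is_diff_p1 z : is_diff z p1 p1.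
Proof.
apply: DiffDef; first exact: linear_differentiable p1_cont.
by rewrite diff_lin //; apply: p1_cont.
Qed.
Global Instance is_diff_p2 z : is_diff z p2 p2.
Proof.
apply: DiffDef; first exact: linear_differentiable p2_cont.
by rewrite diff_lin //; apply: p2_cont.
Qed.

Variables Lxy muy : R.
Definition Fex (x y : 'rV[R]_1) : R := Lxy * (x 0 0 * y 0 0) - muy / 2 * (y 0 0 * y 0 0).

Lemma uncurryFE : uncurryF Fex = Lxy *: (p1 * p2) - (muy / 2) *: (p2 * p2).
Proof. by apply/funext => z. Qed.

Lemma dFex_is z : is_diff z (uncurryF Fex)
  (Lxy *: (p1 z *: p2 + p2 z *: p1) - (muy / 2) *: (p2 z *: p2 + p2 z *: p2) : _ -> R).
Proof.
rewrite uncurryFE.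
apply: is_diffB; apply: is_diffZ; apply: is_diffM.
Qed.

Lemma dFex_diff z : differentiable (uncurryF Fex) z.
Proof. by rewrite uncurryFE; apply: ex_diff. Qed.

Set Printing Width 200.
Lemma gradxE x y : gradx Fex x y 0 0 = Lxy * y 0 0.
Proof.
rewrite /gradx mxE (@diff_val _ _ _ _ _ _ _ (dFex_is (x, y))) /=.
have sc : forall a b : R, a *: b = a * b by []. rewrite /p1 /p2 /= !fctE /= !mxE /= !sc; ring.
Qed.

Lemma gradyE x y : grady Fex x y 0 0 = Lxy * x 0 0 - muy * y 0 0.
Proof.
rewrite /grady mxE (@diff_val _ _ _ _ _ _ _ (dFex_is (x, y))) /=.
have sc : forall a b : R, a *: b = a * b by []. rewrite /p1 /p2 /= !fctE /= !mxE /= !sc; field.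
by [].
Qed.
End S.

Lemma sqnorm1 (R : realType) (u : 'rV[R]_1) : sqnorm u = u 0 0 ^+ 2.
Proof. by rewrite /sqnorm /dotv big_ord1 expr2. Qed.

Lemma enorm1 (R : realType) (u : 'rV[R]_1) : enorm u = `|u 0 0|.
Proof. by rewrite /enorm sqnorm1 sqrtr_sqr. Qed.

Section E.
Variable R : realType.
Implicit Types u v : 'rV[R]_1.
Lemma eB u v : (u - v) 0 0 = u 0 0 - v 0 0. Proof. by rewrite !mxE. Qed.
Lemma eD u v : (u + v) 0 0 = u 0 0 + v 0 0. Proof. by rewrite !mxE. Qed.
Lemma eZ (a : R) u : (a *: u) 0 0 = a * u 0 0. Proof. by rewrite !mxE. Qed.
Lemma e0 : (0 : 'rV[R]_1) 0 0 = 0. Proof. by rewrite !mxE. Qed.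
Lemma eC (a : R) : (const_mx a : 'rV[R]_1) 0 0 = a. Proof. by rewrite !mxE. Qed.
End E.
Definition eE := (eB, eD, eZ, e0, eC).

Lemma rV1_eq (R : realType) (u v : 'rV[R]_1) : u 0 0 = v 0 0 -> u = v.
Proof. by move=> h; apply/rowP => i; rewrite ord1. Qed.

Lemma gradxM (R : realType) (Lxy muy : R) (x y : 'rV[R]_1) :
  gradx (Fex R Lxy muy) x y = const_mx (Lxy * y 0 0).
Proof. by apply: rV1_eq; rewrite gradxE mxE. Qed.
Lemma gradyM (R : realType) (Lxy muy : R) (x y : 'rV[R]_1) :
  grady (Fex R Lxy muy) x y = const_mx (Lxy * x 0 0 - muy * y 0 0).
Proof. by apply: rV1_eq; rewrite gradyE mxE. Qed.

Theorem proposition2p5 (R : realType) (L Lxy muy t r : R) :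
  0 < L -> 0 < Lxy -> 0 < muy -> 0 < t -> 0 < r -> muy <= L ->
  exists (n m : nat) (F : 'rV[R]_n -> 'rV[R]_m -> R)
         (xs x1 : 'rV[R]_n) (ys y1 : 'rV[R]_m),
    [/\ in_class L L Lxy 0 muy F,
        unique_saddle F xs ys,
        sqnorm (x1 - xs) + sqnorm (y1 - ys) = r ^+ 2 &
        let x2 := x1 - t *: gradx F x1 y1 in
        let y2 := y1 + t *: grady F x1 y1 in
        exists alpha : R, 1 <= alpha /\
          sqnorm (x2 - xs) + sqnorm (y2 - ys)
            >= alpha * (sqnorm (x1 - xs) + sqnorm (y1 - ys))].
Proof.
move=> L0 Lxy0 muy0 t0 r0 muyL.
exists 1%N, 1%N, (@Fex R Lxy muy), 0, (const_mx r), 0, 0.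
split.
- split; first by move=> z; exact: dFex_diff.
  split.
    move=> x1 x2 y; rewrite !gradxM !enorm1 !eE subrr normr0.
    by rewrite mulr_ge0 // ltW.
  split.
    move=> x y1 y2; rewrite !gradyM !enorm1 !eE.
    have -> : Lxy * x 0 0 - muy * y2 0 0 - (Lxy * x 0 0 - muy * y1 0 0)
       = - muy * (y2 0 0 - y1 0 0) by ring.
    by rewrite normrM normrN (gtr0_norm muy0) ler_wpM2r.
  split.
    move=> x y1 y2; rewrite !gradxM !enorm1 !eE -mulrBr normrM gtr0_norm //.
  split.
    move=> x1 x2 y; rewrite !gradyM !enorm1 !eE.
    have -> : Lxy * x2 0 0 - muy * y 0 0 - (Lxy * x1 0 0 - muy * y 0 0)
       = Lxy * (x2 0 0 - x1 0 0) by ring.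
    by rewrite normrM gtr0_norm.
  split.
    move=> y u v s _ _; rewrite /Fex !sqnorm1 !mxE.
    rewrite le_eqVlt; apply/orP; left; apply/eqP; ring.
  move=> x u v s _ _; rewrite /Fex !sqnorm1 !mxE.
  rewrite le_eqVlt; apply/orP; left; apply/eqP; ring.
- split.
    move=> x y; rewrite /Fex !mxE; split; nra.
  move=> x' y' H.
  have hy : y' 0 0 = 0.
    have := (H (x' - y') y').2; rewrite /Fex !mxE => h.
    have : Lxy * (y' 0 0 * y' 0 0) <= 0 by lra.
    rewrite (pmulr_rle0 _ Lxy0) => h2.
    have : y' 0 0 * y' 0 0 == 0 by rewrite eq_le h2 -expr2 sqr_ge0.
    by rewrite mulf_eq0 orbb => /eqP.
  pose c := Lxy / muy.
  have hc : c * muy = Lxy by rewrite /c mulfVK // gt_eqF.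
  have c0 : 0 < c by rewrite /c divr_gt0.
  have hx : x' 0 0 = 0.
    have := (H x' (c *: x')).1; rewrite /Fex !mxE hy => h.
    have : c * Lxy / 2 * (x' 0 0 * x' 0 0) <= 0.
      by move: h; rewrite -hc; lra.
    rewrite (pmulr_rle0 _ _) => [h2|]; last by rewrite divr_gt0 // mulr_gt0.
    have : x' 0 0 * x' 0 0 == 0 by rewrite eq_le h2 -expr2 sqr_ge0.
    by rewrite mulf_eq0 orbb => /eqP.
  by split; apply: rV1_eq; rewrite !mxE.
- by rewrite !sqnorm1 !mxE; ring.
cbv zeta; exists (1 : R); split => //.
rewrite gradxM gradyM mul1r !sqnorm1 !eE. rewrite !mulr0 !subr0 !add0r; by rewrite lerD2l expr2 mul0r sqr_ge0.
Qed.
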